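(* Let $A$ be a finite alphabet with $|A|=k$, and let $L\subseteq A^*$ be $n$-PT. Let $m=f_k(n)$. Then ${\uparrow}L$ is $m$-PT, while ${\uparrow}_<L$ and $\min(L)$ are $(m+1)$-PT.
   Context: For words $u,v$, $u\sqsubseteq v$ (subword) means $u=a_1\cdots a_\ell$ with letters $a_i$ and $v=v_0a_1v_1\cdots a_\ell v_\ell$ for some words $v_i$; $u\sqsubset v$ means $u\sqsubseteq v$ and $u\ne v$. ${\uparrow}L=\{v\in A^*~|~\exists u\in L: u\sqsubseteq v\}$, ${\uparrow}_<L=\{v~|~\exists u\in L: u\sqsubset v\}$, and $\min(L)=\{u\in L~|~\forall v\in L: v\not\sqsubset u\}$. For $n\in\mathbb{N}$, $u\sim_n v$ iff $u$ and $v$ have exactly the same subwords of length at most $n$; $L$ is $n$-PT if it is a union of $\sim_n$-classes. The functions $f_k$ ($k\geq1$) are defined by $f_1(n)=n$ and $f_{k+1}(n)=\max_{0\leq m\leq n}\bigl(m f_k(n+1-m)+m+f_k(n-m)\bigr)$. *)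

(* Defs.v *)
From mathcomp Require Import all_boot.
Set Implicit Arguments. Unset Strict Implicit. Unset Printing Implicit Defensive.

(* Words over A are [seq A]; the subword order u ⊑ v is mathcomp's [subseq u v]
   (scattered subsequence).  Languages are predicates [seq A -> Prop]. *)

Definition lang (A : finType) := seq A -> Prop.

Definition ssubword (A : finType) (u v : seq A) : Prop := subseq u v /\ u <> v.

Definition upw (A : finType) (L : lang A) : lang A :=
  fun v => exists2 u, L u & subseq u v.

Definition supw (A : finType) (L : lang A) : lang A :=
  fun v => exists2 u, L u & ssubword u v.

Definition minl (A : finType) (L : lang A) : lang A :=
  fun u => L u /\ forall v, L v -> ~ ssubword v u.

Definition simn (A : finType) (n : nat) (u v : seq A) : Prop :=
  forall w : seq A, size w <= n -> subseq w u = subseq w v.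

Definition nPT (A : finType) (n : nat) (L : lang A) : Prop :=
  forall u v, simn n u v -> (L u <-> L v).

(* f_1(n) = n, f_{k+1}(n) = max_{0<=m<=n} (m f_k(n+1-m) + m + f_k(n-m)).
   The value at k = 0 is a dummy (only k >= 1 is used). *)
Fixpoint fk (k n : nat) {struct k} : nat :=
  match k with
  | 0 => n
  | k'.+1 =>
      if k' == 0 then n
      else \max_(m < n.+1) (m * fk k' (n.+1 - m) + m + fk k' (n - m))
  end.

(* Main.v *)
Require Import Defs.
From mathcomp Require Import all_boot zify.
From Stdlib Require Import Classical Lia.
Set Implicit Arguments. Unset Strict Implicit. Unset Printing Implicit Defensive.

Section S.
Variable A : finType.
Implicit Types (u v w x y z s : seq A) (B : {set A}).

Definition univ B p x := forall w : seq A, size w <= p -> {subset w <= B} -> subseq w x.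

Lemma subseq_catP w x y : subseq w (x ++ y) ->
  exists w1 w2, [/\ w = w1 ++ w2, subseq w1 x & subseq w2 y].
Proof.
elim: x w => [|c x IH] w /=.
  by move=> h; exists [::], w.
case: w => [|d w] /=.
  by move=> _; exists [::], [::]; rewrite !sub0seq.
case: eqP => [<-|_] h.
  have [w1 [w2 [-> h1 h2]]] := IH _ h.
  by exists (d :: w1), w2; rewrite /= eqxx.
have [w1 [w2 [e h1 h2]]] := IH _ h.
exists w1, w2; split => //.
exact: subseq_trans h1 (subseq_cons x c).
Qed.

Lemma univ0 B x : univ B 0 x.
Proof. by move=> [|//] _ _; rewrite sub0seq. Qed.

Lemma univ_le B p p' x : p <= p' -> univ B p' x -> univ B p x.
Proof. by move=> le h w hw; apply: h; apply: leq_trans le. Qed.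

Lemma univ_sub B p x y : univ B p x -> subseq x y -> univ B p y.
Proof. by move=> h hs w hw hB; apply: subseq_trans (h w hw hB) hs. Qed.

Lemma univ_archl B p z y : {subset B <= z} -> univ B p y -> univ B p.+1 (z ++ y).
Proof.
move=> hz h [|c w] hw hB; first by rewrite sub0seq.
rewrite -cat1s; apply: cat_subseq.
  by rewrite sub1seq; apply: hz; apply: hB; rewrite inE eqxx.
by apply: h => // d hd; apply: hB; rewrite inE hd orbT.
Qed.

Lemma univ_archr B p z x : {subset B <= z} -> univ B p x -> univ B p.+1 (x ++ z).
Proof.
move=> hz h w; case/lastP: w => [|w c] hw hB; first by rewrite sub0seq.
rewrite -cats1; apply: cat_subseq.
  apply: h; first by move: hw; rewrite size_rcons.
  by move=> d hd; apply: hB; rewrite mem_rcons inE hd orbT.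
by rewrite sub1seq; apply: hz; apply: hB; rewrite mem_rcons inE eqxx.
Qed.

Lemma splitL B p x z w : univ B p x -> {subset w <= B} -> subseq w (x ++ z) ->
  exists w1 w2, [/\ w = w1 ++ w2, subseq w1 x, subseq w2 z & (p <= size w1) || (w2 == [::])].
Proof.
move=> hu hB /subseq_catP [v1 [v2 [e h1 h2]]].
case: (leqP p (size v1)) => h; first by exists v1, v2; rewrite h.
case: (leqP (size w) p) => hw.
  by exists w, [::]; rewrite cats0 sub0seq eqxx orbT (hu w hw hB).
exists (take p w), (drop p w); split.
- by rewrite cat_take_drop.
- apply: hu; first by rewrite size_takel // ltnW.
  by move=> d /mem_take; apply: hB.
- rewrite e drop_cat ltnNge (ltnW h) /=.
  exact: subseq_trans (drop_subseq _ _) h2.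
- by rewrite size_takel ?leqnn // ltnW.
Qed.

Lemma splitR B q z y w : univ B q y -> {subset w <= B} -> subseq w (z ++ y) ->
  exists w1 w2, [/\ w = w1 ++ w2, subseq w1 z, subseq w2 y & (q <= size w2) || (w1 == [::])].
Proof.
move=> hu hB /subseq_catP [v1 [v2 [e h1 h2]]].
case: (leqP q (size v2)) => h; first by exists v1, v2; rewrite h.
case: (leqP (size w) q) => hw.
  by exists [::], w; rewrite sub0seq eqxx orbT (hu w hw hB).
have hs : size w = size v1 + size v2 by rewrite e size_cat.
exists (take (size w - q) w), (drop (size w - q) w); split.
- by rewrite cat_take_drop.
- have hi : size w - q < size v1 by lia.
  by rewrite {2}e take_cat hi; apply: subseq_trans (take_subseq _ _) h1.
- apply: hu; first by rewrite size_drop; lia.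
  by move=> d /mem_drop; apply: hB.
- rewrite size_drop; apply/orP; left; lia.
Qed.

Lemma key B p q r n x s s' y : univ B p x -> univ B q y ->
  {subset x ++ s ++ y <= B} ->
  (forall w, size w <= r -> subseq w s -> subseq w s') -> subseq s' s ->
  n <= p + q + r -> simn n (x ++ s' ++ y) (x ++ s ++ y).
Proof.
move=> hx hy hB hr hs' hn w hw.
apply/idP/idP => h.
  by apply: subseq_trans h _; rewrite !cat_subseq ?subseq_refl.
have hwB : {subset w <= B} by move=> d /(mem_subseq h); apply: hB.
have [w1 [w2 [e1 h1 h2 c1]]] := splitL hx hwB h.
have hw2B : {subset w2 <= B} by move=> d hd; apply: hwB; rewrite e1 mem_cat hd orbT.
case/orP: c1 => c1; last first.
  by move/eqP: c1 => c1; subst; rewrite cats0; apply: subseq_trans h1 (prefix_subseq _ _).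
have [v1 [v2 [e2 g1 g2 c2]]] := splitR hy hw2B h2.
rewrite e1 e2; apply: cat_subseq => //.
case/orP: c2 => c2; last first.
  by move/eqP: c2 => c2; subst; apply: subseq_trans g2 (suffix_subseq _ _).
apply: cat_subseq => //; apply: hr => //.
have : size w = size w1 + (size v1 + size v2) by rewrite e1 e2 !size_cat.
lia.
Qed.

Lemma arch_dec u : forall B, B != set0 -> {subset B <= u} ->
  exists s a u', [/\ u = s ++ a :: u', a \in B, a \notin s & {subset B <= s ++ [:: a]}].
Proof.
elim: u => [|c u IH] B hB hs.
  by case/set0Pn: hB => b /hs.
case: (boolP (B :\ c == set0)) => h0.
  have hc : forall b, b \in B -> b = c.
    move=> b hb; apply/eqP; apply: contraT => hbc.
    by move/eqP: h0 => /setP /(_ b); rewrite !inE hbc hb.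
  exists [::], c, u; split => //.
    by case/set0Pn: hB => b hb; rewrite -(hc b hb).
  by move=> b /hc ->; rewrite inE.
have hs' : {subset B :\ c <= u}.
  move=> b /setD1P [hbc hb]; move: (hs b hb); rewrite inE (negbTE hbc) //.
have [s [a [u' [e ha hna hsub]]]] := IH _ h0 hs'.
case/setD1P: ha => hac ha.
exists (c :: s), a, u'; split => //.
- by rewrite e.
- by rewrite inE negb_or hac hna.
- move=> b hb; case: (eqVneq b c) => [->|hbc]; first by rewrite inE eqxx.
  have : b \in s ++ [:: a] by apply: hsub; apply/setD1P.
  by rewrite /= inE => ->; rewrite orbT.
Qed.

Lemma nilB B : {subset [::] <= B}.
Proof. by []. Qed.

Definition rigid n u := forall al b be, u = al ++ b :: be -> ~ simn n (al ++ be) u.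

Section Claim.
Variables (B : {set A}) (k : nat) (G : nat -> nat).
Hypothesis hB : #|B| = k.+1.
Hypothesis IH : forall B' : {set A}, #|B'| = k -> forall s, {subset s <= B'} ->
  forall r, rigid r s -> size s <= G r.

Lemma claim u : {subset u <= B} -> forall p x n, p <= n -> univ B p x -> {subset x <= B} ->
 (forall al b be, u = al ++ b :: be -> ~ simn n (x ++ (al ++ be)) (x ++ u)) ->
 exists j, [/\ univ B j u, p + j <= n &
   size u <= j * G (n.+1 - (p + j)) + j + G (n - (p + j))].
Proof.
have [N hN] := ubnP (size u); elim: N u hN => // N IHN u hN huB p x n hpn hx hxB hrig.
have hxuB : forall y, {subset y <= B} -> {subset x ++ u ++ y <= B}.
  by move=> y hy d; rewrite !mem_cat => /or3P [/hxB|/huB|/hy].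
case: (boolP [forall c in B, c \in u]) => hall.
  have hB0 : B != set0 by rewrite -card_gt0 hB.
  have [s [a [u' [e ha hna hsub]]]] := arch_dec hB0 (fun c hc => (forall_inP hall) c hc).
  have hpn' : p < n.
    rewrite ltnNge; apply/negP => hnp.
    apply: (hrig s a u' e).
    have := @key B p 0 0 n x u (s ++ u') [::] hx (@univ0 B [::]) (hxuB _ (@nilB B)).
    rewrite !cats0; apply.
    - by move=> [|//] _ _; rewrite sub0seq.
    - by rewrite e cat_subseq ?subseq_refl ?subseq_cons.
    - by rewrite !addn0.
  have hsB : {subset s <= B} by move=> d hd; apply: huB; rewrite e mem_cat hd.
  have hu'B : {subset u' <= B} by move=> d hd; apply: huB; rewrite e mem_cat inE hd !orbT.
  have hx' : univ B p.+1 (x ++ (s ++ [:: a])) by apply: univ_archr.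
  have hx'B : {subset x ++ (s ++ [:: a]) <= B}.
    by move=> d; rewrite !mem_cat inE => /or3P [/hxB|/hsB|/eqP ->//].
  have hsz : size u' < N by move: hN; rewrite e size_cat /=; lia.
  have hrig' : forall al b be, u' = al ++ b :: be ->
      ~ simn n ((x ++ (s ++ [:: a])) ++ (al ++ be)) ((x ++ (s ++ [:: a])) ++ u').
    move=> al b be e' hs; apply: (hrig (s ++ a :: al) b be).
      by rewrite e e' -catA.
    by move: hs; rewrite e e' -!catA.
  have [j' [hj'1 hj'2 hj'3]] := IHN u' hsz hu'B p.+1 _ n hpn' hx' hx'B hrig'.
  have hsr : size s <= G (n.+1 - (p + j'.+1)).
    apply: (IH (B' := B :\ a)).
    - by move: hB; rewrite (cardsD1 a) ha; case.
    - move=> d hd; apply/setD1P; split; last exact: hsB.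
      by apply: contraNneq hna => <-.
    move=> al b be es hsim.
    apply: (hrig al b (be ++ a :: u')); first by rewrite e es -catA.
    have := @key B p j' (n.+1 - (p + j'.+1)) n x s (al ++ be) (a :: u') hx
       (univ_sub hj'1 (subseq_cons _ _)) _ _ _ _.
    rewrite -!catA /= e es -!catA /=; apply.
    - move=> d hd; apply: (hxuB _ (@nilB B)); rewrite cats0 e; move: hd; rewrite es -!catA.
      by [].
    - by move=> w hw; rewrite -es -(hsim w hw).
    - by rewrite cat_subseq ?subseq_refl ?subseq_cons.
    - lia.
  exists j'.+1; split.
  - by rewrite e -cat1s catA; apply: univ_archl.
  - lia.
  - rewrite e size_cat /=.
    move: hj'3; rewrite addSnnS => hj'3.
    rewrite mulSn; lia.
case/forall_inPn: hall => c hc hcu.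
exists 0; split; first exact: univ0.
- by rewrite addn0.
rewrite mul0n !add0n addn0.
apply: (IH (B' := B :\ c)).
- by move: hB; rewrite (cardsD1 c) hc; case.
- move=> d hd; apply/setD1P; split; last exact: huB.
  by apply: contraNneq hcu => <-.
move=> al b be e hsim; apply: (hrig al b be e).
have := @key B p 0 (n - p) n x u (al ++ be) [::] hx (@univ0 B [::]) (hxuB _ (@nilB B)).
rewrite !cats0; apply.
- by move=> w hw; rewrite (hsim w hw).
- by rewrite e cat_subseq ?subseq_refl ?subseq_cons.
- lia.
Qed.
End Claim.

Fixpoint g (k n : nat) {struct k} : nat :=
  match k with
  | 0 => 0
  | k'.+1 => \max_(m < n.+1) (m * g k' (n.+1 - m) + m + g k' (n - m))
  end.

Lemma main k : forall B : {set A}, #|B| = k -> forall u, {subset u <= B} ->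
  forall n, rigid n u -> size u <= g k n.
Proof.
elim: k => [|k IHk] B hB u huB n hr.
  move/cards0_eq: hB => hB; case: u huB {hr} => [|c u] // huB.
  by have := huB c (mem_head _ _); rewrite hB inE.
have hr' : forall al b be, u = al ++ b :: be -> ~ simn n ([::] ++ (al ++ be)) ([::] ++ u).
  by move=> al b be e; exact: (hr al b be e).
have [j [_ hj hs]] := @claim B k (g k) hB IHk u huB 0 [::] n (leq0n _) (@univ0 B [::]) (@nilB B) hr'.
apply: leq_trans hs _; rewrite add0n /=.
have hjn : j < n.+1 by rewrite ltnS.
have := @leq_bigmax _ (fun m : 'I_n.+1 => m * g k (n.+1 - m) + m + g k (n - m)) (Ordinal hjn); exact.
Qed.

Lemma g1 n : g 1 n = n.
Proof.
apply/eqP; rewrite eqn_leq; apply/andP; split.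
  apply/bigmax_leqP => i _; rewrite /= muln0 !addn0 add0n; exact: (ltn_ord i).
have := @leq_bigmax _ (fun m : 'I_n.+1 => m * g 0 (n.+1 - m) + m + g 0 (n - m)) ord_max.
by rewrite /= muln0 !addn0 add0n.
Qed.

Lemma g_fk k : 0 < k -> forall n, g k n = fk k n.
Proof.
elim: k => [|k IHk] // _ n; case: k IHk => [|k] IHk; first by rewrite g1.
change (\max_(m < n.+1) (m * g k.+1 (n.+1 - m) + m + g k.+1 (n - m)) =
        \max_(m < n.+1) (m * fk k.+1 (n.+1 - m) + m + fk k.+1 (n - m))).
by apply: eq_bigr => i _; rewrite !IHk.
Qed.

Lemma g_ge k n : 0 < k -> n <= g k n.
Proof.
case: k => [|k] // _.
have := @leq_bigmax _ (fun m : 'I_n.+1 => m * g k (n.+1 - m) + m + g k (n - m)) ord_max.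
move=> h; apply: leq_trans h; rewrite /=; lia.
Qed.

Lemma simn_sym n u v : simn n u v -> simn n v u.
Proof. by move=> h w hw; rewrite h. Qed.

Lemma simn_le n m u v : m <= n -> simn n u v -> simn m u v.
Proof. by move=> hm h w hw; apply: h; apply: leq_trans hm. Qed.

Lemma min_rigid (L : lang A) n u : nPT n L -> minl L u -> rigid n u.
Proof.
move=> hL [hu hmin] al b be e hs.
apply: (hmin (al ++ be)); first by apply/(hL _ _ hs).
split; first by rewrite e cat_subseq ?subseq_refl ?subseq_cons.
by move=> h; move: (congr1 size h); rewrite e !size_cat /=; lia.
Qed.

Lemma ssub_size u v : ssubword u v -> size u < size v.
Proof. by case=> h hne; rewrite (ltn_leqif (size_subseq_leqif h)); apply/eqP. Qed.

Lemma exists_min (L : lang A) u : L u -> exists2 u0, minl L u0 & subseq u0 u.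
Proof.
have [N hN] := ubnP (size u); elim: N u hN => // N IHN u hN hu.
case: (classic (forall v, L v -> ~ ssubword v u)) => h.
  by exists u => //; apply: subseq_refl.
have [v hv] : exists v, ~ (L v -> ~ ssubword v u).
  by apply: not_all_ex_not.
have hLv : L v by apply: NNPP => hn; apply: hv => /hn.
have hsv : ssubword v u by apply: NNPP => hn; apply: hv => _.
have [u0 h1 h2] := IHN v (leq_trans (ssub_size hsv) (hN : size u < N.+1)) hLv.
by exists u0 => //; apply: subseq_trans h2 hsv.1.
Qed.

Lemma ins u v : subseq u v -> size u < size v ->
  exists w, [/\ subseq u w, subseq w v & size w = (size u).+1].
Proof.
elim: v u => [|c v IH] [|d u] //= hs hsz.
  by exists [:: c]; split; [exact: sub0seq | exact: (prefix_subseq [:: c] v) | by []].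
move: hs; case: eqP => [-> hs|_ hs].
  have [w [h1 h2 h3]] := IH u hs hsz.
  by exists (c :: w); rewrite /= eqxx h1 h2 h3.
case: (ltnP (size u).+1 (size v)) => hlt.
  have [w [h1 h2 h3]] := IH _ hs hlt.
  by exists w; split => //; apply: subseq_trans h2 (subseq_cons _ _).
have he : d :: u = v.
  apply/eqP; rewrite -(geq_leqif (size_subseq_leqif hs)) /=; lia.
exists (c :: v); split; [rewrite -he; exact: subseq_cons | exact: (subseq_refl (c :: v)) | by rewrite -he].
Qed.
End S.

Theorem theorem11 (A : finType) (k n : nat) (L : lang A) :
  #|A| = k -> 0 < k -> nPT n L ->
  nPT (fk k n) (upw L) /\ nPT (fk k n).+1 (supw L) /\ nPT (fk k n).+1 (minl L).
Proof.
move=> hk k0 hL; rewrite -(g_fk k0).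
have bnd : forall u, minl L u -> size u <= g k n.
  move=> u hu; apply: (@main A k [set: A]).
  - by rewrite cardsT.
  - by move=> *; rewrite inE.
  - exact: min_rigid hL hu.
have up : forall u v, simn (g k n) u v -> upw L u -> upw L v.
  move=> u v h [u1 hL1 hs1]; have [u0 hm hs0] := exists_min hL1.
  exists u0; first exact: hm.1.
  rewrite -(h u0 (bnd _ hm)); exact: subseq_trans hs0 hs1.
have sup : forall u v, simn (g k n).+1 u v -> supw L u -> supw L v.
  move=> u v h [u1 hL1 hs1]; have [u0 hm hs0] := exists_min hL1.
  have hsz : size u0 < size u := leq_ltn_trans (size_subseq hs0) (ssub_size hs1).
  have [w [w1 w2 w3]] := ins (subseq_trans hs0 hs1.1) hsz.
  have hwv : subseq w v by rewrite -(h w _) // w3 ltnS; exact: bnd.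
  exists u0; first exact: hm.1.
  split; first exact: subseq_trans w1 hwv.
  by move=> e; have := size_subseq hwv; rewrite -e w3 ltnn.
have mn : forall u v, simn (g k n).+1 u v -> minl L u -> minl L v.
  move=> u v h [hu hmin]; split.
    apply/(hL u v) => //; apply: simn_le h; apply: leq_trans (g_ge n k0) _; exact: leqnSn.
  move=> v' hv' hs.
  have [u0 h0 h1] := sup v u (simn_sym h) (ex_intro2 _ _ v' hv' hs).
  exact: hmin u0 h0 h1.
split; [|split] => u v h; split.
- exact: up.
- by apply: up; apply: simn_sym.
- exact: sup.
- by apply: sup; apply: simn_sym.
- exact: mn.
- by apply: mn; apply: simn_sym.
Qed.
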